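(* For every natural number $\alpha<\omega$ and every $n\in\mathbb N$, $n\ge1$, \[ f_{(\omega^{\omega^\alpha})^n}\in d_{1/2}^{\omega^{1+\alpha}\cdot n}\Big(B_{\ell_1([0,(\omega^{\omega^\alpha})^n])}\Big). \]
   Context: Ordinal arithmetic throughout. For an ordinal $\gamma$, $[0,\gamma]$ has the order topology and $\ell_1([0,\gamma])$ is identified with $C([0,\gamma])^*$ (weak$^*$-topology accordingly). For $\beta\le\gamma$, $f_\beta\in\ell_1([0,\gamma])$ is the indicator of $\{\beta\}$. For a weak$^*$-compact $K$ in a dual $X^*$: $H(x,t)=\{x^*: x^*(x)>t\}$; a weak$^*$-slice of $K$ is a nonempty $H(x,t)\cap K$; $d_\varepsilon K$ is $K$ minus the union of all weak$^*$-slices of $K$ of norm diameter $<\varepsilon$; $d_\varepsilon^0K=K$, $d_\varepsilon^{\beta+1}K=d_\varepsilon(d_\varepsilon^\beta K)$, $d_\varepsilon^\beta K=\bigcap_{\mu<\beta}d_\varepsilon^\mu K$ for limit $\beta$. *)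

(* Defs.v *)
From Stdlib Require Import Reals List Arith Bool.
Open Scope R_scope.

(** * Ordinals below epsilon_0 in Cantor normal form.
    [ocons a n b] denotes  omega^a * (S n) + b. *)
Inductive T1 : Set :=
| zero : T1
| ocons : T1 -> nat -> T1 -> T1.

Fixpoint compare (x y : T1) : comparison :=
  match x, y with
  | zero, zero => Eq
  | zero, ocons _ _ _ => Lt
  | ocons _ _ _, zero => Gt
  | ocons a n b, ocons a' n' b' =>
      match compare a a' with
      | Lt => Lt
      | Gt => Gt
      | Eq => match Nat.compare n n' with
              | Lt => Lt
              | Gt => Gt
              | Eq => compare b b'
              end
      end
  end.

Definition ltb (x y : T1) : bool :=
  match compare x y with Lt => true | _ => false end.
Definition leb (x y : T1) : bool :=
  match compare x y with Gt => false | _ => true end.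

Fixpoint nfb (x : T1) : bool :=
  match x with
  | zero => true
  | ocons a _ b =>
      nfb a && nfb b &&
      match b with zero => true | ocons a' _ _ => ltb a' a end
  end.

Fixpoint oplus (x y : T1) : T1 :=
  match x, y with
  | zero, _ => y
  | _, zero => x
  | ocons a n b, ocons a' n' b' =>
      match compare a a' with
      | Lt => y
      | Gt => ocons a n (oplus b y)
      | Eq => ocons a (S (n + n')) b'
      end
  end.

Fixpoint omult (x y : T1) {struct y} : T1 :=
  match x, y with
  | zero, _ => zero
  | _, zero => zero
  | ocons a n b, ocons zero n' _ => ocons a (n * n' + n + n') b
  | _, ocons a' n' b' => oplus (ocons (oplus (match x with ocons a _ _ => a | zero => zero end) a') n' zero) (omult x b')
  end.

Definition fin (k : nat) : T1 :=
  match k with 0%nat => zero | S k' => ocons zero k' zero end.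

Definition omega_pow (x : T1) : T1 := ocons x 0 zero.

Definition opow_nat (x : T1) (k : nat) : T1 :=
  Nat.iter k (fun y => omult y x) (fin 1).

(** * The compact space [0, gamma] with the order topology. *)
Definition P (g : T1) : Set := { b : T1 | nfb b && leb b g = true }.

Definition ltP {g} (a b : P g) : Prop := ltb (proj1_sig a) (proj1_sig b) = true.

(** Basic open intervals of the order topology: (lo, hi), where a missing
    endpoint means "unbounded on that side". *)
Definition in_interval {g} (lo hi : option (P g)) (y : P g) : Prop :=
  (match lo with None => True | Some a => ltP a y end) /\
  (match hi with None => True | Some c => ltP y c end).

Definition continuous {g} (x : P g -> R) : Prop :=
  forall b (eps : R), 0 < eps ->
    exists lo hi, in_interval lo hi b /\
      forall y, in_interval lo hi y -> Rabs (x y - x b) < eps.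

Fixpoint sumlist {g} (f : P g -> R) (l : list (P g)) : R :=
  match l with nil => 0 | b :: l' => f b + sumlist f l' end.

Definition has_sum {g} (f : P g -> R) (L : R) : Prop :=
  forall eps, 0 < eps ->
    exists F0 : list (P g), NoDup F0 /\
      forall F : list (P g), NoDup F -> incl F0 F ->
        Rabs (sumlist f F - L) < eps.

Definition l1_norm_le {g} (mu : P g -> R) (r : R) : Prop :=
  forall F : list (P g), NoDup F -> sumlist (fun b => Rabs (mu b)) F <= r.

Definition ball (g : T1) (mu : P g -> R) : Prop := l1_norm_le mu 1.

Definition indicator (g beta : T1) (b : P g) : R :=
  if ltb (proj1_sig b) beta || ltb beta (proj1_sig b) then 0 else 1.

(** Duality C([0,gamma])^* = ell_1: x^*(x) > t. *)
Definition pair_gt {g} (mu : P g -> R) (x : P g -> R) (t : R) : Prop :=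
  exists L, has_sum (fun b => mu b * x b) L /\ t < L.

Definition slice {g} (K : (P g -> R) -> Prop) (x : P g -> R) (t : R)
  : (P g -> R) -> Prop :=
  fun mu => K mu /\ pair_gt mu x t.

Definition diam_lt {g} (S : (P g -> R) -> Prop) (eps : R) : Prop :=
  exists r, r < eps /\
    forall mu nu, S mu -> S nu -> l1_norm_le (fun b => mu b - nu b) r.

Definition d_eps {g} (eps : R) (K : (P g -> R) -> Prop) : (P g -> R) -> Prop :=
  fun mu => K mu /\
    ~ (exists (x : P g -> R) (t : R),
          continuous x /\ slice K x t mu /\ diam_lt (slice K x t) eps).

Definition is_derivation (g : T1) (eps : R) (K : (P g -> R) -> Prop) (Bd : T1)
  (D : T1 -> (P g -> R) -> Prop) : Prop :=
  (forall mu, D zero mu <-> K mu) /\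
  (forall b, nfb b = true -> ltb b Bd = true ->
     forall mu, D (oplus b (fin 1)) mu <-> d_eps eps (D b) mu) /\
  (forall b, nfb b = true -> leb b Bd = true -> b <> zero ->
     (forall c, nfb c = true -> b <> oplus c (fin 1)) ->
     forall mu, D b mu <-> (forall c, nfb c = true -> ltb c b = true -> D c mu)).

(* Main.v *)
Require Import Defs.
From Stdlib Require Import Reals List Arith Bool Lia Lra PeanoNat Permutation Eqdep_dec ClassicalEpsilon FunctionalExtensionality.
Import Defs.
Open Scope R_scope.


Lemma compare_refl x : compare x x = Eq.
Proof. induction x; simpl; auto. rewrite IHx1, Nat.compare_refl; auto. Qed.

Lemma compare_eq x y : compare x y = Eq -> x = y.
Proof.
  revert y; induction x as [|a IHa n b IHb]; destruct y as [|a' n' b']; simpl; try discriminate; auto.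
  destruct (compare a a') eqn:E1; try discriminate.
  destruct (Nat.compare n n') eqn:E2; try discriminate.
  intro E3. apply IHa in E1. apply Nat.compare_eq in E2. apply IHb in E3. subst; auto.
Qed.

Lemma compare_sym x y : compare y x = CompOpp (compare x y).
Proof.
  revert y; induction x as [|a IHa n b IHb]; destruct y as [|a' n' b']; simpl; auto.
  rewrite (IHa a'). destruct (compare a a'); simpl; auto.
  rewrite (Nat.compare_antisym n n'). destruct (Nat.compare n n'); simpl; auto.
Qed.

Lemma lt_ocons a n b a' n' b' :
  compare (ocons a n b) (ocons a' n' b') = Lt <->
  compare a a' = Lt \/ (a = a' /\ ((n < n')%nat \/ (n = n' /\ compare b b' = Lt))).
Proof.
  simpl. destruct (compare a a') eqn:E1.
  - apply compare_eq in E1; subst. destruct (Nat.compare n n') eqn:E2.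
    + apply Nat.compare_eq in E2; subst. split; intro H; auto.
      destruct H as [H|[_ [H|[_ H]]]]; auto; try discriminate; try lia.
    + apply Nat.compare_lt_iff in E2. split; auto.
    + apply Nat.compare_gt_iff in E2. split; try discriminate.
      intros [H|[_ [H|[H _]]]]; try discriminate; lia.
  - split; auto.
  - split; try discriminate. intros [H|[H _]]; try discriminate. subst. rewrite compare_refl in E1; discriminate.
Qed.

Lemma compare_trans x y z : compare x y = Lt -> compare y z = Lt -> compare x z = Lt.
Proof.
  revert y z; induction x as [|a IHa n b IHb]; destruct y as [|a' n' b']; destruct z as [|a'' n'' b'']; simpl; auto; try discriminate.
  intros H1 H2. apply lt_ocons in H1. apply lt_ocons in H2. apply lt_ocons.
  destruct H1 as [H1|[-> [H1|[-> H1]]]]; destruct H2 as [H2|[<- [H2|[<- H2]]]];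
   first [left; eapply IHa; eassumption | left; assumption | right; split; [reflexivity|]];
   first [left; lia | right; split; [reflexivity| eapply IHb; eassumption]].
Qed.



Lemma ltb_iff x y : ltb x y = true <-> compare x y = Lt.
Proof. unfold ltb. destruct (compare x y); split; congruence. Qed.
Lemma leb_iff x y : leb x y = true <-> compare x y <> Gt.
Proof. unfold leb. destruct (compare x y); split; congruence. Qed.

Lemma le_lt_trans x y z : compare x y <> Gt -> compare y z = Lt -> compare x z = Lt.
Proof.
  intros H1 H2. destruct (compare x y) eqn:E; try congruence.
  - apply compare_eq in E; subst; auto.
  - eapply compare_trans; eauto.
Qed.
Lemma lt_le_trans x y z : compare x y = Lt -> compare y z <> Gt -> compare x z = Lt.
Proof.
  intros H1 H2. destruct (compare y z) eqn:E; try congruence.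
  - apply compare_eq in E; subst; auto.
  - eapply compare_trans; eauto.
Qed.
Lemma le_trans x y z : compare x y <> Gt -> compare y z <> Gt -> compare x z <> Gt.
Proof.
  intros H1 H2. destruct (compare x y) eqn:E; try congruence.
  - apply compare_eq in E; subst; auto.
  - rewrite (lt_le_trans x y z); congruence.
Qed.
Lemma lt_not_gt x y : compare x y = Lt -> compare x y <> Gt.
Proof. congruence. Qed.
Lemma gt_lt x y : compare x y = Gt -> compare y x = Lt.
Proof. intro H. rewrite compare_sym, H; auto. Qed.
Lemma not_lt_le x y : compare x y <> Lt -> compare y x <> Gt.
Proof. rewrite (compare_sym x y). destruct (compare x y); simpl; congruence. Qed.
Lemma lt_irrefl x : compare x x <> Lt.
Proof. rewrite compare_refl; congruence. Qed.

Definition ltnf (y x : T1) : Prop := nfb y = true /\ ltb y x = true.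

Definition below (a y : T1) : bool :=
  match y with zero => true | ocons a' _ _ => ltb a' a end.

Lemma nfb_ocons a n b : nfb (ocons a n b) = true <-> nfb a = true /\ nfb b = true /\ below a b = true.
Proof. simpl. destruct b; simpl; rewrite ?andb_true_iff; tauto. Qed.

Lemma acc_zero : Acc ltnf zero.
Proof. constructor. intros y [_ H]. apply ltb_iff in H. destruct y; simpl in H; discriminate. Qed.

Lemma acc_key a : Acc ltnf a -> forall n b, nfb b = true -> below a b = true -> Acc ltnf (ocons a n b).
Proof.
  induction 1 as [a _ IHa]. intro n. induction n as [n IHn] using lt_wf_ind.
  intros b Hb Hab.
  assert (Ab : Acc ltnf b).
  { destruct b as [|a2 n2 b2]. apply acc_zero.
    apply nfb_ocons in Hb as (H1&H2&H3). apply IHa; auto. split; auto. }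
  revert Hb Hab. induction Ab as [b _ IHb]. intros Hb Hab.
  constructor. intros y [Hy Hlt]. destruct y as [|a' n' b']. apply acc_zero.
  apply ltb_iff, lt_ocons in Hlt. apply nfb_ocons in Hy as (H1&H2&H3).
  destruct Hlt as [H|[-> [H|[-> H]]]].
  - apply IHa; auto. split; auto. apply ltb_iff; auto.
  - apply IHn; auto.
  - apply IHb; auto. split; auto. apply ltb_iff; auto.
Qed.

Lemma acc_nf x : nfb x = true -> Acc ltnf x.
Proof.
  induction x as [|a IHa n b IHb]; intro H. apply acc_zero.
  apply nfb_ocons in H as (H1&H2&H3). apply acc_key; auto.
Qed.

Lemma ltnf_wf : well_founded ltnf.
Proof. intro x. constructor. intros y [Hy _]. apply acc_nf; auto. Qed.


Lemma below_mono a x y : below a y = true -> compare x y <> Gt -> below a x = true.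
Proof.
  destruct x as [|a1 n1 b1]; destruct y as [|a2 n2 b2]; simpl; auto; try congruence.
  intros H1 H2. apply ltb_iff in H1. apply ltb_iff.
  apply (le_lt_trans _ a2); auto. simpl in H2. destruct (compare a1 a2); congruence.
Qed.

Lemma oplus_succ_zero : oplus zero (fin 1) = fin 1.
Proof. reflexivity. Qed.
Lemma oplus_succ_fin n : oplus (ocons zero n zero) (fin 1) = ocons zero (S n) zero.
Proof. simpl. rewrite Nat.add_0_r. auto. Qed.
Lemma oplus_succ_pos a n b : a <> zero -> oplus (ocons a n b) (fin 1) = ocons a n (oplus b (fin 1)).
Proof. destruct a; [congruence|]. reflexivity. Qed.

Lemma nf_fin_tail n b : nfb (ocons zero n b) = true -> b = zero.
Proof. intro H. apply nfb_ocons in H as (_&_&H). destruct b; auto. simpl in H. apply ltb_iff in H. destruct b1; discriminate. Qed.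

Lemma compare_ocons_eq a n b b' : compare (ocons a n b) (ocons a n b') = compare b b'.
Proof. simpl. rewrite compare_refl, Nat.compare_refl. auto. Qed.

Lemma succ_props c : nfb c = true ->
  nfb (oplus c (fin 1)) = true /\ compare c (oplus c (fin 1)) = Lt /\
  (forall a, a <> zero -> below a c = true -> below a (oplus c (fin 1)) = true) /\
  (forall d, nfb d = true -> compare d (oplus c (fin 1)) = Lt -> compare d c <> Gt).
Proof.
  induction c as [|a IHa n b IHb]; intro H.
  - simpl. repeat split; auto. intros a Ha _. destruct a; [congruence|reflexivity].
    intros d Hd Hl. destruct d as [|a' n' b']; simpl; try congruence.
    apply lt_ocons in Hl. destruct Hl as [Hl|[-> [Hl|[-> Hl]]]]; try lia.
    destruct a'; discriminate. destruct b'; discriminate.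
  - destruct a as [|a1 n1 b1].
    + pose proof (nf_fin_tail _ _ H); subst b. rewrite oplus_succ_fin.
      repeat split; auto.
      * simpl. replace (Nat.compare n (S n)) with Lt; auto. symmetry; apply Nat.compare_lt_iff. lia.
      * intros d Hd Hl. destruct d as [|a' n' b']; simpl; try congruence.
        apply lt_ocons in Hl. destruct Hl as [Hl|[-> [Hl|[-> Hl]]]].
        -- destruct a'; discriminate.
        -- rewrite (nf_fin_tail _ _ Hd). simpl. destruct (Nat.compare n' n) eqn:E; try congruence.
           apply Nat.compare_gt_iff in E. lia.
        -- destruct b'; discriminate.
    + rewrite oplus_succ_pos by discriminate.
      apply nfb_ocons in H as (H1&H2&H3). destruct (IHb H2) as (S1&S2&S3&S4).
      repeat split.
      * apply nfb_ocons. split; auto. split; auto. apply S3; auto. discriminate.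
      * rewrite compare_ocons_eq. auto.
      * intros a _ Ha. exact Ha.
      * intros d Hd Hl. destruct d as [|a' n' b']; [simpl; discriminate|].
        apply lt_ocons in Hl. destruct Hl as [Hl|[-> [Hl|[-> Hl]]]].
        -- assert (Hx: compare (ocons a' n' b') (ocons (ocons a1 n1 b1) n b) = Lt) by (apply lt_ocons; auto). rewrite Hx; discriminate.
        -- assert (Hx: compare (ocons (ocons a1 n1 b1) n' b') (ocons (ocons a1 n1 b1) n b) = Lt) by (apply lt_ocons; auto). rewrite Hx; discriminate.
        -- apply nfb_ocons in Hd as (_&Hd&_). rewrite compare_ocons_eq in *.
           apply (S4 b' Hd Hl).
Qed.

Lemma succ_nonzero c : oplus c (fin 1) <> zero.
Proof. destruct c as [|[|] ? ?]; simpl; discriminate. Qed.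

Lemma antisym x y : compare x y <> Gt -> compare y x <> Gt -> x = y.
Proof.
  intros H1 H2. rewrite compare_sym in H2. destruct (compare x y) eqn:E; simpl in *; try congruence.
  apply compare_eq; auto.
Qed.

Lemma succ_inj b c : nfb b = true -> nfb c = true -> oplus b (fin 1) = oplus c (fin 1) -> b = c.
Proof.
  intros Hb Hc E. destruct (succ_props b Hb) as (_&B2&_&B4). destruct (succ_props c Hc) as (_&C2&_&C4).
  apply antisym.
  - apply C4; auto. rewrite <- E; auto.
  - apply B4; auto. rewrite E; auto.
Qed.

Fixpoint lastexp x := match x with zero => zero | ocons a _ b => match b with zero => a | _ => lastexp b end end.
Fixpoint allpos x : Prop := match x with zero => True | ocons a _ b => a <> zero /\ allpos b end.

Lemma not_succ_allpos c : nfb c = true -> (forall c', nfb c' = true -> c <> oplus c' (fin 1)) -> allpos c.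
Proof.
  induction c as [|a IHa n b IHb]; intros H Hs; simpl; auto.
  destruct a as [|a1 n1 b1].
  - pose proof (nf_fin_tail _ _ H); subst b. exfalso. destruct n as [|m].
    + apply (Hs zero); reflexivity.
    + apply (Hs (ocons zero m zero)); [reflexivity|]. rewrite oplus_succ_fin; auto.
  - split; [discriminate|]. apply nfb_ocons in H as (H1&H2&H3). apply IHb; auto.
    intros b' Hb' E. apply (Hs (ocons (ocons a1 n1 b1) n b')).
    + apply nfb_ocons. split; auto. split; auto. apply (below_mono _ _ b); auto.
      destruct (succ_props b' Hb') as (_&X&_). rewrite E. congruence.
    + rewrite oplus_succ_pos by discriminate. rewrite E; auto.
Qed.

Definition onep a := oplus (fin 1) a.
Lemma onep_compare x y : compare (onep x) (onep y) = compare x y.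
Proof.
  unfold onep. destruct x as [|[|] ? ?], y as [|[|] ? ?]; simpl; auto.
Qed.

Fixpoint mulw x := match x with zero => zero | ocons a n b => ocons (onep a) n (mulw b) end.

Lemma mulw_compare x y : compare (mulw x) (mulw y) = compare x y.
Proof.
  revert y; induction x as [|a IHa n b IHb]; destruct y as [|a' n' b']; auto.
  change (compare (ocons (onep a) n (mulw b)) (ocons (onep a') n' (mulw b')) = compare (ocons a n b) (ocons a' n' b')).
  simpl. rewrite onep_compare, IHb. auto.
Qed.

Definition onem a := match a with ocons zero 0 _ => zero | ocons zero (S m) b => ocons zero m b | _ => a end.
Fixpoint divw x := match x with zero => zero | ocons a n b => ocons (onem a) n (divw b) end.

Lemma onep_onem a : nfb a = true -> a <> zero -> onep (onem a) = a.
Proof.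
  intros H Hz. destruct a as [|[|a1 n1 b1] n b]; try congruence.
  - rewrite (nf_fin_tail _ _ H). destruct n; reflexivity.
  - reflexivity.
Qed.

Lemma nf_onem a : nfb a = true -> nfb (onem a) = true.
Proof.
  intros H. destruct a as [|[|a1 n1 b1] n b]; auto.
  rewrite (nf_fin_tail _ _ H). destruct n; reflexivity.
Qed.

Lemma mulw_divw c : nfb c = true -> allpos c -> mulw (divw c) = c.
Proof.
  induction c as [|a IHa n b IHb]; intros H Hp; simpl; auto.
  apply nfb_ocons in H as (H1&H2&H3). destruct Hp as [Ha Hb].
  rewrite onep_onem, IHb; auto.
Qed.

Lemma nf_divw c : nfb c = true -> allpos c -> nfb (divw c) = true.
Proof.
  induction c as [|a IHa n b IHb]; intros H Hp; simpl; auto.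
  pose proof H as H'. apply nfb_ocons in H as (H1&H2&H3). destruct Hp as [Ha Hb].
  change (nfb (ocons (onem a) n (divw b)) = true). apply nfb_ocons.
  split; [apply nf_onem; auto|]. split; [apply IHb; auto|].
  destruct b as [|a2 n2 b2]; auto. simpl. destruct Hb as [Ha2 _].
  apply nfb_ocons in H2 as (H21&_). simpl in H3.
  apply ltb_iff. rewrite <- onep_compare, !onep_onem; auto. apply ltb_iff; auto.
Qed.

Lemma approx_S a th lo : nfb a = true -> nfb th = true -> compare th a = Lt -> nfb lo = true -> below a lo = true ->
  exists g, nfb g = true /\ compare lo g = Lt /\ below a g = true /\ g <> zero /\ compare th (lastexp g) <> Gt.
Proof.
  intros Ha Hth Hlt Hlo Hb. destruct lo as [|a' k' b'].
  - exists (ocons th 0 zero). simpl. rewrite Hth, compare_refl. repeat split; try discriminate.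
    apply ltb_iff; auto.
  - apply nfb_ocons in Hlo as (L1&L2&L3). simpl in Hb. apply ltb_iff in Hb.
    destruct (compare a' th) eqn:E.
    + exists (ocons a' (S k') zero). simpl. rewrite L1, compare_refl. 
      replace (Nat.compare k' (S k')) with Lt by (symmetry; apply Nat.compare_lt_iff; lia).
      repeat split; try discriminate. all: try (apply ltb_iff; assumption). apply compare_eq in E; subst; rewrite compare_refl; discriminate.
    + exists (ocons th 0 zero). simpl. rewrite Hth, E. repeat split; try discriminate. all: try (apply ltb_iff; assumption). all: rewrite ?compare_refl; try discriminate.
    + exists (ocons a' (S k') zero). simpl. rewrite L1, compare_refl. 
      replace (Nat.compare k' (S k')) with Lt by (symmetry; apply Nat.compare_lt_iff; lia).
      repeat split; try discriminate. all: try (apply ltb_iff; assumption). rewrite compare_sym, E; discriminate.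
Qed.

Lemma lastexp_ocons_nz a k g : g <> zero -> lastexp (ocons a k g) = lastexp g.
Proof. destruct g; simpl; congruence. Qed.

Lemma below_lt a g k b : below a g = true -> g <> zero -> compare g (ocons a k b) = Lt.
Proof. destruct g as [|a'' ? ?]; [congruence|]. simpl. intros H _. apply ltb_iff in H. rewrite H; auto. Qed.

Lemma approx b0 : nfb b0 = true -> forall th lo, nfb th = true -> compare th (lastexp b0) = Lt ->
  nfb lo = true -> compare lo b0 = Lt ->
  exists g, nfb g = true /\ compare lo g = Lt /\ compare g b0 = Lt /\ compare th (lastexp g) <> Gt.
Proof.
  induction b0 as [|a IHa k b IHb]; intros Hb0 th lo Hth Hlast Hlo Hlt.
  - destruct lo; discriminate.
  - pose proof Hb0 as Hb0'. apply nfb_ocons in Hb0 as (H1&H2&H3).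
    destruct b as [|a2 k2 b2].
    + simpl in Hlast.
      assert (Gen: forall lo', nfb lo' = true -> below a lo' = true -> exists g, nfb g = true /\ compare lo' g = Lt /\ compare g (ocons a k zero) = Lt /\ compare th (lastexp g) <> Gt).
      { intros lo' Hl1 Hl2. destruct (approx_S a th lo' H1 Hth Hlast Hl1 Hl2) as (g&G1&G2&G3&G4&G5).
        exists g. repeat split; auto. apply below_lt; auto. }
      destruct lo as [|a' k' b'].
      * apply Gen; auto.
      * pose proof Hlo as Hlo'. apply nfb_ocons in Hlo as (L1&L2&L3).
        destruct (compare a' a) eqn:E.
        -- apply compare_eq in E; subst a'.
           apply lt_ocons in Hlt. destruct Hlt as [Hlt|[_ [Hlt|[_ Hlt]]]].
           ++ rewrite compare_refl in Hlt; discriminate.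
           ++ destruct (approx_S a th b' H1 Hth Hlast L2 L3) as (g&G1&G2&G3&G4&G5).
              exists (ocons a k' g). repeat split.
              ** apply nfb_ocons; auto.
              ** rewrite compare_ocons_eq; auto.
              ** apply lt_ocons. right. split; auto.
              ** rewrite lastexp_ocons_nz; auto.
           ++ destruct b'; discriminate.
        -- apply Gen; auto. simpl. apply ltb_iff; auto.
        -- apply lt_ocons in Hlt. destruct Hlt as [Hlt|[Hlt _]]. rewrite E in Hlt; discriminate.
           subst; rewrite compare_refl in E; discriminate.
    + rewrite lastexp_ocons_nz in Hlast by discriminate.
      assert (Gen: exists g, nfb g = true /\ g <> zero /\ compare g (ocons a2 k2 b2) = Lt /\ compare th (lastexp g) <> Gt).
      { destruct (IHb H2 th zero Hth Hlast eq_refl eq_refl) as (g&G1&G2&G3&G4).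
        exists g. repeat split; auto. intro; subst; discriminate. }
      destruct Gen as (g&G1&G2&G3&G4).
      assert (Hg: nfb (ocons a k g) = true).
      { apply nfb_ocons. repeat split; auto. apply (below_mono _ _ (ocons a2 k2 b2)); auto. congruence. }
      destruct lo as [|a' k' b'].
      * exists (ocons a k g). repeat split; auto.
        rewrite compare_ocons_eq; auto. rewrite lastexp_ocons_nz; auto.
      * pose proof Hlt as Hlt'. apply lt_ocons in Hlt. destruct Hlt as [Hlt|[-> [Hlt|[-> Hlt]]]].
        -- exists (ocons a k g). repeat split; auto.
           apply lt_ocons; auto. rewrite compare_ocons_eq; auto. rewrite lastexp_ocons_nz; auto.
        -- exists (ocons a k g). repeat split; auto.
           apply lt_ocons; auto. rewrite compare_ocons_eq; auto. rewrite lastexp_ocons_nz; auto.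
        -- apply nfb_ocons in Hlo as (L1&L2&L3).
           destruct (IHb H2 th b' Hth Hlast L2 Hlt) as (g'&G1'&G2'&G3'&G4').
           exists (ocons a k g').
           assert (g' <> zero) by (intro; subst; destruct b'; discriminate).
           repeat split.
           ++ apply nfb_ocons. repeat split; auto. apply (below_mono _ _ (ocons a2 k2 b2)); auto. congruence.
           ++ rewrite compare_ocons_eq; auto.
           ++ rewrite compare_ocons_eq; auto.
           ++ rewrite lastexp_ocons_nz; auto.
Qed.

Lemma g_form alpha m : opow_nat (omega_pow (omega_pow (fin alpha))) (S m) = ocons (ocons (fin alpha) m zero) 0 zero.
Proof.
  induction m as [|m IH].
  - reflexivity.
  - unfold opow_nat in *. change (Nat.iter (S (S m)) (fun y => omult y (omega_pow (omega_pow (fin alpha)))) (fin 1))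
      with (omult (Nat.iter (S m) (fun y => omult y (omega_pow (omega_pow (fin alpha)))) (fin 1)) (omega_pow (omega_pow (fin alpha)))).
    rewrite IH. unfold omega_pow. simpl. rewrite compare_refl, Nat.add_0_r. reflexivity.
Qed.

Lemma Bd_form alpha m : omult (omega_pow (oplus (fin 1) (fin alpha))) (fin (S m)) = mulw (ocons (fin alpha) m zero).
Proof. reflexivity. Qed.

Lemma nf_fin k : nfb (fin k) = true.
Proof. destruct k; reflexivity. Qed.

Lemma nf_g alpha m : nfb (ocons (ocons (fin alpha) m zero) 0 zero) = true.
Proof. simpl. rewrite nf_fin. reflexivity. Qed.

Lemma nf_Bd alpha m : nfb (mulw (ocons (fin alpha) m zero)) = true.
Proof. destruct alpha; reflexivity. Qed.


Lemma T1_eq_dec (x y : T1) : {x = y} + {x <> y}.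
Proof. decide equality. apply Nat.eq_dec. Defined.

Lemma Peq_dec {g} (a b : P g) : {a = b} + {a <> b}.
Proof.
  destruct a as [x hx], b as [y hy]. destruct (T1_eq_dec x y) as [E|E].
  - left. subst. f_equal. apply UIP_dec. apply bool_dec.
  - right. intro H. inversion H. auto.
Defined.

Lemma sumlist_app {g} (f : P g -> R) l1 l2 : sumlist f (l1 ++ l2) = sumlist f l1 + sumlist f l2.
Proof. induction l1; simpl; [ring|rewrite IHl1; ring]. Qed.

Lemma sumlist_ext {g} (f h : P g -> R) l : (forall b, In b l -> f b = h b) -> sumlist f l = sumlist h l.
Proof. induction l; simpl; intros H; auto. rewrite H, IHl; auto. Qed.

Lemma sumlist_plus {g} (f h : P g -> R) l : sumlist (fun b => f b + h b) l = sumlist f l + sumlist h l.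
Proof. induction l; simpl; [ring|rewrite IHl; ring]. Qed.

Lemma sumlist_scal {g} (f : P g -> R) c l : sumlist (fun b => c * f b) l = c * sumlist f l.
Proof. induction l; simpl; [ring|rewrite IHl; ring]. Qed.

Lemma sumlist_zero {g} (f : P g -> R) l : (forall b, In b l -> f b = 0) -> sumlist f l = 0.
Proof. induction l; simpl; intros H; auto. rewrite H, IHl; auto. ring. Qed.

Lemma sumlist_le {g} (f h : P g -> R) l : (forall b, In b l -> f b <= h b) -> sumlist f l <= sumlist h l.
Proof. induction l; simpl; intros H. lra. pose proof (H a (or_introl eq_refl)). pose proof (IHl (fun b Hb => H b (or_intror Hb))). lra. Qed.

Lemma sumlist_perm {g} (f : P g -> R) l l' : Permutation l l' -> sumlist f l = sumlist f l'.
Proof. induction 1; simpl; auto; try lra. Qed.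

Lemma sumlist_filter {g} (f : P g -> R) (p : P g -> bool) l :
  sumlist f l = sumlist f (filter p l) + sumlist f (filter (fun b => negb (p b)) l).
Proof. induction l; simpl. ring. destruct (p a); simpl; rewrite IHl; ring. Qed.

Definition inb {g} (S : list (P g)) (b : P g) : bool := if in_dec Peq_dec b S then true else false.

Lemma sum_support {g} (f : P g -> R) F S : NoDup F -> NoDup S -> incl S F ->
  (forall b, In b F -> ~ In b S -> f b = 0) -> sumlist f F = sumlist f S.
Proof.
  intros HF HS Hinc H0. rewrite (sumlist_filter f (inb S) F).
  rewrite (sumlist_zero f (filter (fun b => negb (inb S b)) F)).
  - rewrite Rplus_0_r. apply sumlist_perm. apply NoDup_Permutation; auto. apply NoDup_filter; auto.
    intro x. rewrite filter_In. unfold inb. destruct (in_dec Peq_dec x S); split; intuition; discriminate.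
  - intros b Hb. apply filter_In in Hb as [Hb1 Hb2]. unfold inb in Hb2.
    destruct (in_dec Peq_dec b S); simpl in Hb2; try discriminate. apply H0; auto.
Qed.

Definition fsprob {g} (S : list (P g)) (mu : P g -> R) : Prop :=
  NoDup S /\ (forall b, 0 <= mu b) /\ (forall b, ~ In b S -> mu b = 0) /\ sumlist mu S = 1.

Lemma fs_sum {g} S (mu h : P g -> R) F : fsprob S mu -> NoDup F -> incl S F ->
  sumlist (fun b => mu b * h b) F = sumlist (fun b => mu b * h b) S.
Proof.
  intros (H1&H2&H3&H4) HF Hi. apply sum_support; auto. intros b _ Hb. rewrite H3; auto. ring.
Qed.

Lemma fs_has_sum {g} S (mu h : P g -> R) : fsprob S mu -> has_sum (fun b => mu b * h b) (sumlist (fun b => mu b * h b) S).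
Proof.
  intros Hf eps Heps. exists S. split. apply Hf.
  intros F HF Hi. rewrite (fs_sum S mu h F); auto. rewrite Rminus_diag, Rabs_R0. auto.
Qed.

Lemma has_sum_unique {g} (f : P g -> R) L1 L2 : has_sum f L1 -> has_sum f L2 -> L1 = L2.
Proof.
  intros H1 H2. destruct (Req_dec L1 L2) as [E|E]; auto. exfalso.
  set (eps := Rabs (L1 - L2) / 2).
  assert (Hep : 0 < eps). { unfold eps. assert (L1 - L2 <> 0) by lra. apply Rabs_pos_lt in H. lra. }
  destruct (H1 eps Hep) as (F1&N1&K1). destruct (H2 eps Hep) as (F2&N2&K2).
  set (F := nodup Peq_dec (F1 ++ F2)).
  assert (NF : NoDup F) by apply NoDup_nodup.
  assert (I1 : incl F1 F). { intros x Hx. apply nodup_In. apply in_or_app; auto. }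
  assert (I2 : incl F2 F). { intros x Hx. apply nodup_In. apply in_or_app; auto. }
  specialize (K1 F NF I1). specialize (K2 F NF I2). unfold eps in *.
  revert K1 K2. generalize (sumlist f F). intros s K1 K2.
  destruct (Rcase_abs (L1 - L2)); [rewrite (Rabs_left (L1-L2)) in *|rewrite (Rabs_right (L1-L2)) in *]; auto;
  unfold Rabs in K1, K2; destruct (Rcase_abs (s - L1)); destruct (Rcase_abs (s - L2)); lra.
Qed.

Lemma pair_fs {g} S (mu x : P g -> R) t : fsprob S mu ->
  (pair_gt mu x t <-> t < sumlist (fun b => mu b * x b) S).
Proof.
  intros Hf. split.
  - intros (L&HL&Ht). rewrite (has_sum_unique _ _ _ (fs_has_sum S mu x Hf) HL). auto.
  - intro Ht. exists (sumlist (fun b => mu b * x b) S). split; auto. apply fs_has_sum; auto.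
Qed.

Lemma fs_ball {g} S (mu : P g -> R) : fsprob S mu -> ball g mu.
Proof.
  intros Hf F HF. destruct Hf as (H1&H2&H3&H4).
  set (G := F ++ filter (fun b => negb (inb F b)) S).
  assert (NG : NoDup G).
  { apply NoDup_app; auto. apply NoDup_filter; auto. intros a Ha Hb. apply filter_In in Hb as [_ Hb].
    unfold inb in Hb. destruct (in_dec Peq_dec a F); simpl in Hb; congruence. }
  assert (IG : incl S G).
  { intros a Ha. apply in_or_app. destruct (in_dec Peq_dec a F); auto. right. apply filter_In. split; auto.
    unfold inb. destruct (in_dec Peq_dec a F); auto; contradiction. }
  assert (E : sumlist mu G = sumlist mu S). { apply sum_support; auto. }
  unfold G in E. rewrite sumlist_app in E.
  assert (0 <= sumlist mu (filter (fun b => negb (inb F b)) S)).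
  { rewrite <- (sumlist_zero (fun _ => 0) (filter (fun b => negb (inb F b)) S)) by auto. apply sumlist_le. auto. }
  rewrite (sumlist_ext _ mu). lra. intros b _. apply Rabs_right. apply Rle_ge. auto.
Qed.

Lemma proj_inj {g} (a b : P g) : proj1_sig a = proj1_sig b -> a = b.
Proof. destruct a as [x hx], b as [y hy]; simpl; intro; subst. f_equal. apply UIP_dec, bool_dec. Qed.

Lemma ind_val {g} (be b : P g) : indicator g (proj1_sig be) b = if Peq_dec b be then 1 else 0.
Proof.
  unfold indicator, ltb. destruct (Peq_dec b be) as [->|Hn].
  - rewrite compare_refl. reflexivity.
  - destruct (compare (proj1_sig b) (proj1_sig be)) eqn:E.
    + apply compare_eq, proj_inj in E. contradiction.
    + reflexivity.
    + rewrite compare_sym, E. reflexivity.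
Qed.

Lemma fs_point {g} (be : P g) : fsprob (be :: nil) (indicator g (proj1_sig be)).
Proof.
  repeat split.
  - constructor; [intros []|constructor].
  - intro b. rewrite ind_val. destruct Peq_dec; lra.
  - intros b Hb. rewrite ind_val. destruct Peq_dec; auto. subst; exfalso; apply Hb; left; auto.
  - simpl. rewrite ind_val. destruct Peq_dec; [lra|congruence].
Qed.

Lemma pair_point {g} (be : P g) (x : P g -> R) : sumlist (fun b => indicator g (proj1_sig be) b * x b) (be :: nil) = x be.
Proof. simpl. rewrite ind_val. destruct Peq_dec; [lra|congruence]. Qed.

Definition avg {g} (n1 n2 : P g -> R) : P g -> R := fun b => (n1 b + n2 b) / 2.

Lemma fs_avg {g} S1 S2 (n1 n2 : P g -> R) : fsprob S1 n1 -> fsprob S2 n2 ->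
  (forall b, In b S1 -> ~ In b S2) -> fsprob (S1 ++ S2) (avg n1 n2).
Proof.
  intros F1 F2 Hd. pose proof F1 as (A1&B1&C1&D1). pose proof F2 as (A2&B2&C2&D2).
  assert (N : NoDup (S1 ++ S2)) by (apply NoDup_app; auto).
  repeat split; auto.
  - intro b. unfold avg. specialize (B1 b); specialize (B2 b); lra.
  - intros b Hb. unfold avg. rewrite C1, C2; [lra| |]; intro; apply Hb; apply in_or_app; auto.
  - unfold avg. 
    rewrite (sumlist_ext _ (fun b => /2 * (n1 b * 1) + /2 * (n2 b * 1))) by (intros; unfold Rdiv; ring).
    rewrite sumlist_plus, !sumlist_scal.
    rewrite (fs_sum S1 n1 (fun _ => 1)), (fs_sum S2 n2 (fun _ => 1)); auto.
    + rewrite (sumlist_ext (fun b => n1 b * 1) n1) by (intros; ring).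
      rewrite (sumlist_ext (fun b => n2 b * 1) n2) by (intros; ring). rewrite D1, D2. lra.
    + intros x Hx; apply in_or_app; auto.
    + intros x Hx; apply in_or_app; auto.
Qed.

Lemma pair_avg {g} S1 S2 (n1 n2 x : P g -> R) : fsprob S1 n1 -> fsprob S2 n2 ->
  (forall b, In b S1 -> ~ In b S2) ->
  sumlist (fun b => avg n1 n2 b * x b) (S1 ++ S2) =
   (sumlist (fun b => n1 b * x b) S1 + sumlist (fun b => n2 b * x b) S2) / 2.
Proof.
  intros F1 F2 Hd. pose proof F1 as (A1&B1&C1&D1). pose proof F2 as (A2&B2&C2&D2).
  assert (N : NoDup (S1 ++ S2)) by (apply NoDup_app; auto).
  unfold avg. rewrite (sumlist_ext _ (fun b => /2 * (n1 b * x b) + /2 * (n2 b * x b))) by (intros; unfold Rdiv; ring).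
  rewrite sumlist_plus, !sumlist_scal.
  rewrite (fs_sum S1 n1 x), (fs_sum S2 n2 x); auto. lra.
  intros y Hy; apply in_or_app; auto. intros y Hy; apply in_or_app; auto.
Qed.

Lemma dist_avg1 {g} S1 S2 (n1 n2 : P g -> R) r : fsprob S1 n1 -> fsprob S2 n2 ->
  (forall b, In b S1 -> ~ In b S2) -> r < 1/2 -> ~ l1_norm_le (fun b => avg n1 n2 b - n1 b) r.
Proof.
  intros F1 F2 Hd Hr H. pose proof F1 as (A1&B1&C1&D1). pose proof F2 as (A2&B2&C2&D2).
  specialize (H S2 A2). rewrite (sumlist_ext _ (fun b => /2 * n2 b)) in H.
  - rewrite sumlist_scal, D2 in H. lra.
  - intros b Hb. unfold avg. rewrite C1. rewrite Rabs_right. unfold Rdiv; ring.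
    specialize (B2 b). lra. intro Hb1. apply (Hd b); auto.
Qed.

Lemma dist_avg2 {g} S1 S2 (n1 n2 : P g -> R) r : fsprob S1 n1 -> fsprob S2 n2 ->
  (forall b, In b S1 -> ~ In b S2) -> r < 1/2 -> ~ l1_norm_le (fun b => avg n1 n2 b - n2 b) r.
Proof.
  intros F1 F2 Hd Hr H. pose proof F1 as (A1&B1&C1&D1). pose proof F2 as (A2&B2&C2&D2).
  specialize (H S1 A1). rewrite (sumlist_ext _ (fun b => /2 * n1 b)) in H.
  - rewrite sumlist_scal, D1 in H. lra.
  - intros b Hb. unfold avg. rewrite C2. rewrite Rabs_right. unfold Rdiv; ring.
    specialize (B1 b). lra. apply Hd; auto.
Qed.

Lemma dist_point {g} S (n : P g -> R) (be : P g) r : fsprob S n -> ~ In be S -> r < 1 ->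
  ~ l1_norm_le (fun b => indicator g (proj1_sig be) b - n b) r.
Proof.
  intros (A&B&C&D) Hn Hr H. specialize (H (be :: nil)). simpl in H.
  rewrite ind_val, C in H by auto. destruct Peq_dec; [|congruence].
  rewrite Rminus_0_r, Rabs_R1 in H. assert (NoDup (be :: nil)) by (constructor; [intros []|constructor]). specialize (H H0). lra.
Qed.

Lemma fs_nonempty {g} S (n : P g -> R) : fsprob S n -> S <> nil.
Proof. intros (_&_&_&D) E. subst. simpl in D. lra. Qed.

Lemma fs_pair_lower {g} S (n x : P g -> R) m : fsprob S n -> (forall b, In b S -> m <= x b) ->
  m <= sumlist (fun b => n b * x b) S.
Proof.
  intros (A&B&C&D) H. replace m with (sumlist (fun b => m * n b) S).
  - apply sumlist_le. intros b Hb. specialize (H b Hb). specialize (B b). nra.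
  - rewrite sumlist_scal, D. ring.
Qed.

Lemma list_max {g} (S : list (P g)) : S <> nil -> exists m, In m S /\ forall b, In b S -> compare (proj1_sig b) (proj1_sig m) <> Gt.
Proof.
  induction S as [|a S IH]; intros H; [congruence|].
  destruct S as [|a2 S'].
  - exists a. split; [left; auto|]. intros b [<-|[]]. rewrite compare_refl; discriminate.
  - destruct IH as (m&Hm&Hmax); [discriminate|].
    destruct (compare (proj1_sig a) (proj1_sig m)) eqn:E.
    + exists m. split; [right; auto|]. intros b [<-|Hb]; auto. congruence.
    + exists m. split; [right; auto|]. intros b [<-|Hb]; auto. congruence.
    + exists a. split; [left; auto|]. intros b [<-|Hb]. rewrite compare_refl; discriminate.
      apply (le_trans _ (proj1_sig m)); auto. rewrite compare_sym, E; discriminate.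
Qed.


Lemma succ_pf x c : nfb c = true /\ x = oplus c (fin 1) -> ltnf c x.
Proof. intros [H ->]. split; auto. apply ltb_iff. apply succ_props; auto. Qed.

Definition step (g : T1) (x : T1) (rec : forall y, ltnf y x -> (P g -> R) -> Prop) : (P g -> R) -> Prop :=
  match excluded_middle_informative (x = zero) with
  | left _ => ball g
  | right _ =>
    match excluded_middle_informative (exists c, nfb c = true /\ x = oplus c (fin 1)) with
    | left H => d_eps (1/2) (rec (proj1_sig (constructive_indefinite_description _ H))
                   (succ_pf _ _ (proj2_sig (constructive_indefinite_description _ H))))
    | right _ => fun mu => forall c (H : ltnf c x), rec c H mu
    end
  end.

Definition Dfix (g : T1) : T1 -> (P g -> R) -> Prop := Fix ltnf_wf (fun _ => (P g -> R) -> Prop) (step g).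

Lemma Dfix_eq g x : Dfix g x = step g x (fun y _ => Dfix g y).
Proof.
  unfold Dfix. apply (Fix_eq ltnf_wf (fun _ => (P g -> R) -> Prop) (step g)). intros x0 f h Hfh.
  assert (f = h). { apply functional_extensionality_dep. intro y. apply functional_extensionality_dep. intro p. apply Hfh. }
  subst; reflexivity.
Qed.

Lemma Dfix_deriv g Bd : is_derivation g (1/2) (ball g) Bd (Dfix g).
Proof.
  split; [|split].
  - intro mu. rewrite Dfix_eq. unfold step. destruct (excluded_middle_informative (zero = zero)); [tauto|congruence].
  - intros b Hb _ mu. rewrite Dfix_eq. unfold step.
    destruct (excluded_middle_informative (oplus b (fin 1) = zero)) as [E|_]. { exfalso; apply (succ_nonzero b); auto. }
    destruct (excluded_middle_informative (exists c, nfb c = true /\ oplus b (fin 1) = oplus c (fin 1))) as [H|H].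
    + destruct (constructive_indefinite_description _ H) as [c [Hc E]]. simpl.
      apply succ_inj in E; auto. subst. tauto.
    + exfalso. apply H. exists b. auto.
  - intros b Hb _ Hz Hs mu. rewrite Dfix_eq. unfold step.
    destruct (excluded_middle_informative (b = zero)) as [E|_]. { congruence. }
    destruct (excluded_middle_informative (exists c, nfb c = true /\ b = oplus c (fin 1))) as [H|H].
    + exfalso. destruct H as [c [Hc E]]. apply (Hs c); auto.
    + split.
      * intros H1 c Hc Hlt. apply (H1 c (conj Hc Hlt)).
      * intros H1 c [Hc Hlt]. apply H1; auto.
Qed.

Lemma classify c : nfb c = true -> c = zero \/ (exists c', nfb c' = true /\ c = oplus c' (fin 1)) \/
  (c <> zero /\ forall c', nfb c' = true -> c <> oplus c' (fin 1)).
Proof.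
  intro H. destruct (T1_eq_dec c zero); auto. right.
  destruct (Classical_Prop.classic (exists c', nfb c' = true /\ c = oplus c' (fin 1))) as [E|E]; auto.
  right. split; auto. intros c' Hc' Ec. apply E. eauto.
Qed.

Lemma P_nf {g} (a : P g) : nfb (proj1_sig a) = true.
Proof. destruct a as [x h]. simpl. apply andb_true_iff in h. tauto. Qed.
Lemma P_le {g} (a : P g) : compare (proj1_sig a) g <> Gt.
Proof. destruct a as [x h]. simpl. apply andb_true_iff in h as [_ h]. apply leb_iff; auto. Qed.

Lemma ltP_iff {g} (a b : P g) : ltP a b <-> compare (proj1_sig a) (proj1_sig b) = Lt.
Proof. unfold ltP. apply ltb_iff. Qed.

Lemma find_gamma {g} (be : P g) th lo : nfb th = true -> compare th (lastexp (proj1_sig be)) = Lt ->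
  in_interval lo None be -> exists ga : P g, in_interval lo (Some be) ga /\ compare th (lastexp (proj1_sig ga)) <> Gt.
Proof.
  intros Hth Hlt Hlo.
  set (lo0 := match lo with None => zero | Some a => proj1_sig a end).
  assert (N0 : nfb lo0 = true). { unfold lo0. destruct lo; auto. apply P_nf. }
  assert (L0 : compare lo0 (proj1_sig be) = Lt).
  { unfold lo0. destruct lo as [a|].
    - destruct Hlo as [Hlo _]. apply ltP_iff; auto.
    - destruct (proj1_sig be); auto. simpl in Hlt. destruct th; discriminate. }
  destruct (approx (proj1_sig be) (P_nf be) th lo0 Hth Hlt N0 L0) as (ga&G1&G2&G3&G4).
  assert (Hp : nfb ga && leb ga g = true).
  { apply andb_true_iff. split; auto. apply leb_iff. apply lt_not_gt. eapply lt_le_trans; eauto. apply P_le. }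
  exists (exist _ ga Hp). simpl. split; auto. split.
  - unfold lo0 in G2. destruct lo; auto. apply ltP_iff; auto.
  - apply ltP_iff; auto.
Qed.

Lemma in_int_trans {g} lo hi (be b : P g) : in_interval lo (Some be) b -> in_interval lo hi be -> in_interval lo hi b.
Proof.
  intros [H1 H2] [H3 H4]. split; auto. destruct hi as [h|]; auto.
  apply ltP_iff. apply ltP_iff in H2. apply ltP_iff in H4. eapply compare_trans; eauto.
Qed.

Lemma Conv g Bd D : is_derivation g (1/2) (ball g) Bd D ->
  forall c, nfb c = true -> compare c Bd <> Gt ->
  forall S1 n1 S2 n2, fsprob S1 n1 -> fsprob S2 n2 -> (forall b, In b S1 -> ~ In b S2) ->
  D c n1 -> D c n2 -> D c (avg n1 n2).
Proof.
  intros (HD0&HDs&HDl) c. induction c as [c IH] using (well_founded_induction ltnf_wf).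
  intros Hc HcB S1 n1 S2 n2 F1 F2 Hd D1 D2.
  destruct (classify c Hc) as [->|[(c'&Hc'&->)|(Hz&Hs)]].
  - apply HD0. apply (fs_ball (S1 ++ S2)). apply fs_avg; auto. 
  - destruct (succ_props c' Hc') as (_&Hlt&_).
    assert (HB : ltb c' Bd = true) by (apply ltb_iff; eapply lt_le_trans; eauto).
    apply (HDs c' Hc' HB) in D1. apply (HDs c' Hc' HB) in D2. apply (HDs c' Hc' HB).
    destruct D1 as [D1a D1b]. destruct D2 as [D2a D2b].
    split.
    + apply (IH c' (conj Hc' (proj2 (ltb_iff _ _) Hlt)) Hc' (lt_not_gt _ _ (lt_le_trans _ _ _ Hlt HcB)) S1 n1 S2 n2); auto.
    + intros (x&t&Hx&[Hin Hpair]&Hdiam). apply (pair_fs (S1 ++ S2)) in Hpair; [|apply fs_avg; auto].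
      rewrite pair_avg in Hpair; auto.
      destruct (Rlt_dec t (sumlist (fun b => n1 b * x b) S1)) as [T1|T1].
      * apply D1b. exists x, t. split; auto. split; [split; auto; apply (pair_fs S1); auto|].
        exact Hdiam.
      * apply D2b. exists x, t. split; auto. split; [split; auto; apply (pair_fs S2); auto; lra|].
        exact Hdiam.
  - assert (HcB' : leb c Bd = true) by (apply leb_iff; auto).
    apply (HDl c Hc HcB' Hz Hs). intros c' Hc' Hlt.
    pose proof (proj1 (HDl c Hc HcB' Hz Hs n1) D1 c' Hc' Hlt) as D1'.
    pose proof (proj1 (HDl c Hc HcB' Hz Hs n2) D2 c' Hc' Hlt) as D2'.
    assert (Hl2 := Hlt). apply ltb_iff in Hl2.
    apply (IH c' (conj Hc' Hlt) Hc' (lt_not_gt _ _ (lt_le_trans _ _ _ Hl2 HcB)) S1 n1 S2 n2); auto.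
Qed.

Lemma Main g Bd D : is_derivation g (1/2) (ball g) Bd D ->
  forall c, nfb c = true -> compare c Bd <> Gt ->
  (forall be : P g, compare c (mulw (lastexp (proj1_sig be))) <> Gt -> D c (indicator g (proj1_sig be))) /\
  (forall be : P g, compare c (mulw (lastexp (proj1_sig be))) = Lt -> forall lo : option (P g), in_interval lo None be ->
     exists S n, fsprob S n /\ D c n /\ forall b, In b S -> in_interval lo (Some be) b).
Proof.
  intros HD. pose proof HD as (HD0&HDs&HDl). intro c. induction c as [c IH] using (well_founded_induction ltnf_wf).
  intros Hc HcB.
  destruct (classify c Hc) as [->|[(c'&Hc'&->)|(Hz&Hs)]].
  - split.
    + intros be _. apply HD0. apply (fs_ball (be :: nil)). apply fs_point.
    + intros be Hbe lo Hlo.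
      assert (Hl : compare zero (lastexp (proj1_sig be)) = Lt).
      { destruct (lastexp (proj1_sig be)) eqn:E; auto. }
      destruct (find_gamma be zero lo eq_refl Hl Hlo) as (ga&G1&G2).
      exists (ga :: nil), (indicator g (proj1_sig ga)). split; [apply fs_point|]. split.
      * apply HD0. apply (fs_ball (ga :: nil)). apply fs_point.
      * intros b [<-|[]]; auto.
  - destruct (succ_props c' Hc') as (_&Hlt&_).
    assert (HB : ltb c' Bd = true) by (apply ltb_iff; eapply lt_le_trans; eauto).
    assert (Hlt' : ltnf c' (oplus c' (fin 1))) by (split; auto; apply ltb_iff; auto).
    assert (Hc'B : compare c' Bd <> Gt) by (apply lt_not_gt; eapply lt_le_trans; eauto).
    destruct (IH c' Hlt' Hc' Hc'B) as [IHA IHB].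
    assert (PartA : forall be : P g, compare (oplus c' (fin 1)) (mulw (lastexp (proj1_sig be))) <> Gt -> D (oplus c' (fin 1)) (indicator g (proj1_sig be))).
    { intros be Hbe. apply (HDs c' Hc' HB). split.
      - apply IHA. apply lt_not_gt. eapply lt_le_trans; eauto.
      - intros (x&t&Hx&[Hin Hpair]&(r&Hr&Hdiam)).
        apply (pair_fs (be :: nil)) in Hpair; [|apply fs_point]. rewrite pair_point in Hpair.
        destruct (Hx be ((x be - t)/2)) as (lo&hi&Hin2&Hclose). lra.
        destruct (IHB be (lt_le_trans _ _ _ Hlt Hbe) lo (conj (proj1 Hin2) I)) as (S&n&F&Dn&Sup).
        assert (Pn : pair_gt n x t).
        { apply (pair_fs S); auto.
          assert ((x be + t)/2 <= sumlist (fun b => n b * x b) S); [|lra].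
          apply fs_pair_lower; auto. intros b Hb.
          specialize (Hclose b (in_int_trans _ _ _ _ (Sup b Hb) Hin2)).
          apply Rabs_def2 in Hclose. lra. }
        apply (dist_point S n be r F).
        + intro Hb. destruct (Sup be Hb) as [_ Hb2]. apply ltP_iff in Hb2. apply (lt_irrefl _ Hb2).
        + lra.
        + apply Hdiam; split; auto; apply (pair_fs (be :: nil)); [apply fs_point| rewrite pair_point; auto]. }
    split; auto.
    intros be Hbe lo Hlo.
    assert (Hb' : compare c' (mulw (lastexp (proj1_sig be))) = Lt) by (eapply compare_trans; eauto).
    destruct (IHB be Hb' lo Hlo) as (S1&n1&F1&Dn1&Sup1).
    destruct (list_max S1 (fs_nonempty S1 n1 F1)) as (m&Hm&Hmax).
    destruct (IHB be Hb' (Some m) (conj (proj2 (Sup1 m Hm)) I)) as (S2&n2&F2&Dn2&Sup2).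
    assert (Hd : forall b, In b S1 -> ~ In b S2).
    { intros b Hb1 Hb2. specialize (Hmax b Hb1). destruct (Sup2 b Hb2) as [X _]. apply ltP_iff in X.
      apply Hmax. rewrite compare_sym, X. reflexivity. }
    exists (S1 ++ S2), (avg n1 n2). split; [apply fs_avg; auto|]. split.
    + assert (Dav : D c' (avg n1 n2)) by (apply (Conv g Bd D HD c' Hc' Hc'B S1 n1 S2 n2); auto).
      apply (HDs c' Hc' HB). split; auto.
      intros (x&t&Hx&[Hin Hpair]&(r&Hr&Hdiam)).
        apply (pair_fs (S1 ++ S2)) in Hpair; [|apply fs_avg; auto].
        rewrite pair_avg in Hpair; auto.
        destruct (Rlt_dec t (sumlist (fun b => n1 b * x b) S1)) as [T1|T1].
        -- apply (dist_avg1 S1 S2 n1 n2 r); auto.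
           apply Hdiam; split; auto; [apply (pair_fs (S1 ++ S2)); [apply fs_avg; auto|]; rewrite pair_avg; auto; lra | apply (pair_fs S1); auto].
        -- apply (dist_avg2 S1 S2 n1 n2 r); auto.
           apply Hdiam; split; auto; [apply (pair_fs (S1 ++ S2)); [apply fs_avg; auto|]; rewrite pair_avg; auto; lra | apply (pair_fs S2); auto; lra].
    + intros b Hb. apply in_app_or in Hb as [Hb|Hb]; auto.
      destruct (Sup2 b Hb) as [X Y]. split; auto.
      destruct lo as [a|]; auto. destruct (Sup1 m Hm) as [Z _].
      apply ltP_iff. apply ltP_iff in X. apply ltP_iff in Z. eapply compare_trans; eauto.
  - assert (HcB' : leb c Bd = true) by (apply leb_iff; auto).
    assert (PartA : forall be : P g, compare c (mulw (lastexp (proj1_sig be))) <> Gt -> D c (indicator g (proj1_sig be))).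
    { intros be Hbe. apply (HDl c Hc HcB' Hz Hs). intros c' Hc' Hlt.
      assert (Hl2 := Hlt). apply ltb_iff in Hl2.
      apply (IH c' (conj Hc' Hlt) Hc' (lt_not_gt _ _ (lt_le_trans _ _ _ Hl2 HcB))).
      apply lt_not_gt. eapply lt_le_trans; eauto. }
    split; auto.
    intros be Hbe lo Hlo.
    pose proof (not_succ_allpos c Hc Hs) as Hap.
    assert (Hth : compare (divw c) (lastexp (proj1_sig be)) = Lt).
    { rewrite <- mulw_compare, mulw_divw; auto. }
    destruct (find_gamma be (divw c) lo (nf_divw c Hc Hap) Hth Hlo) as (ga&G1&G2).
    exists (ga :: nil), (indicator g (proj1_sig ga)). split; [apply fs_point|]. split.
    * apply PartA. rewrite <- (mulw_divw c) by auto. rewrite mulw_compare. auto.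
    * intros b [<-|[]]; auto.
Qed.


Theorem mainTheorem9 (alpha n : nat) (hn : (1 <= n)%nat) :
  let g := opow_nat (omega_pow (omega_pow (fin alpha))) n in
  let Bd := omult (omega_pow (oplus (fin 1) (fin alpha))) (fin n) in
  (exists D, is_derivation g (1/2) (ball g) Bd D) /\
  (forall D, is_derivation g (1/2) (ball g) Bd D -> D Bd (indicator g g)).
Proof.
  intros g Bd. split.
  - exists (Dfix g). apply Dfix_deriv.
  - intros D HD. destruct n as [|m]; [lia|].
    assert (Hnf : nfb g && leb g g = true).
    { apply andb_true_iff. split. unfold g. rewrite g_form. apply nf_g. apply leb_iff. rewrite compare_refl. discriminate. }
    assert (HBd : nfb Bd = true). { unfold Bd. rewrite Bd_form. apply nf_Bd. }
    destruct (Main g Bd D HD Bd HBd ltac:(rewrite compare_refl; discriminate)) as [A _].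
    assert (Hc : compare Bd (mulw (lastexp g)) <> Gt).
    { unfold g, Bd. rewrite g_form, Bd_form. simpl lastexp. rewrite compare_refl. discriminate. }
    exact (A (exist _ g Hnf) Hc).
Qed.
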